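(* Let $b^2>a^2>0$, $\theta\in[0,1]$, $s\ge0$, and let $u=(u^{(1)},u^{(2)},u^{(3)})^{\mathrm T}$ solve $$u_{tt}-a^2\Delta u-(b^2-a^2)\nabla\operatorname{div}u+(-\Delta)^{\theta}u_t=0\ \text{ on }(0,\infty)\times\mathbb{R}^3,\qquad (u,u_t)(0,\cdot)=(u_0,u_1),$$ with $(u_0^{(k)},u_1^{(k)})\in\dot H^{s+1}(\mathbb{R}^3)\times\dot H^s(\mathbb{R}^3)$ for $k=1,2,3$. Then for $k=1,2,3$ and $t\ge0$, $$\||D|^{s+1}u^{(k)}(t,\cdot)\|_{L^2}+\||D|^su^{(k)}_t(t,\cdot)\|_{L^2}\lesssim\sum_{j=1}^3\big\|(u^{(j)}_0,u^{(j)}_1)\big\|_{\dot H^{s+1}\times\dot H^s}.$$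
   Context: $(-\Delta)^\theta$ and $|D|^s$ are the Fourier multipliers with symbols $|\xi|^{2\theta}$ and $|\xi|^s$; $\dot H^s$ are homogeneous Sobolev spaces. $f\lesssim g$ means $f\le Cg$ with $C$ independent of $t$ and the data. *)

(* Defs.v *)
From HB Require Import structures.
From mathcomp Require Import all_boot all_order all_algebra.
From mathcomp Require Import all_classical all_reals all_analysis.
Set Implicit Arguments. Unset Strict Implicit. Unset Printing Implicit Defensive.
Import Order.TTheory GRing.Theory Num.Theory.
Import numFieldNormedType.Exports.
Local Open Scope classical_set_scope.
Local Open Scope ring_scope.

Definition R3 (R : realType) := ((R * R) * R)%type.

Definition leb3 (R : realType) :=
  ((@lebesgue_measure R \x @lebesgue_measure R) \x @lebesgue_measure R)%E.

Definition coord3 (R : realType) (xi : R3 R) (k : 'I_3) : R :=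
  match val k with 0%N => xi.1.1 | 1%N => xi.1.2 | _ => xi.2 end.

Definition norm3 (R : realType) (xi : R3 R) : R :=
  Num.sqrt (\sum_(j < 3) coord3 xi j ^+ 2).

(* A C^3-valued function of xi is represented by its real (p = false) and
   imaginary (p = true) parts: v xi p k = Re/Im of the k-th component. *)
Definition cfield (R : realType) := R3 R -> bool -> 'I_3 -> R.

Definition cabs2 (R : realType) (v : cfield R) (xi : R3 R) (k : 'I_3) : R :=
  v xi false k ^+ 2 + v xi true k ^+ 2.

(* Squared homogeneous Sobolev norm, on the Fourier side:
   || |D|^s f ||_{L^2}^2 = c * \int |xi|^{2s} |\hat f(xi)|^2 dxi
   (the Plancherel constant c is irrelevant for a "lesssim" estimate). *)
Definition hdot2 (R : realType) (s : R) (v : cfield R) (k : 'I_3) : \bar R :=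
  (\int[@leb3 R]_(xi in setT) ((norm3 xi) `^ (2 * s) * cabs2 v xi k)%:E)%E.

Definition hdot (R : realType) (s : R) (v : cfield R) (k : 'I_3) : \bar R :=
  poweR (hdot2 s v k) (2^-1).

Definition hdot_pair (R : realType) (s : R) (f g : cfield R) (k : 'I_3) : \bar R :=
  poweR (hdot2 (s + 1) f k + hdot2 s g k)%E (2^-1).

(* The Fourier-transformed system: for each fixed xi, with w = \hat u(t, xi),
   w'' + a^2 |xi|^2 w + (b^2 - a^2) xi (xi . w) + |xi|^{2 theta} w' = 0,
   which is the Fourier symbol of
   u_tt - a^2 Delta u - (b^2-a^2) grad div u + (-Delta)^theta u_t = 0. *)
Definition lame_symbol (R : realType) (a b theta : R) (xi : R3 R)
    (w w' w'' : bool -> 'I_3 -> R) : Prop :=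
  forall (p : bool) (k : 'I_3),
    w'' p k + a ^+ 2 * norm3 xi ^+ 2 * w p k
    + (b ^+ 2 - a ^+ 2) * coord3 xi k * (\sum_(j < 3) coord3 xi j * w p j)
    + (norm3 xi) `^ (2 * theta) * w' p k = 0.

(* (U, Ut) is a (classical in time, Fourier side) solution with data (u0, u1):
   U t = \hat u(t, .), Ut t = \hat u_t(t, .). *)
Definition is_lame_solution (R : realType) (a b theta : R)
    (u0 u1 : cfield R) (U Ut : R -> cfield R) : Prop :=
  [/\ forall xi p k, U 0 xi p k = u0 xi p k,
      forall xi p k, Ut 0 xi p k = u1 xi p k,
      forall xi p k, U t xi p k @[t --> 0^'+] --> U 0 xi p k,
      forall xi p k, Ut t xi p k @[t --> 0^'+] --> Ut 0 xi p k &
      forall t : R, 0 < t -> forall xi : R3 R,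
        exists Utt : bool -> 'I_3 -> R,
          (forall p k, is_derive t (1:R) (fun r : R => U r xi p k) (Ut t xi p k)) /\
          (forall p k, is_derive t (1:R) (fun r : R => Ut r xi p k) (Utt p k)) /\
          lame_symbol a b theta xi (U t xi) (Ut t xi) Utt].

Definition in_hdot_pair (R : realType) (s : R) (f g : cfield R) : Prop :=
  forall k : 'I_3,
    [/\ forall p, measurable_fun setT (fun xi => f xi p k),
        forall p, measurable_fun setT (fun xi => g xi p k),
        (hdot2 (s + 1) f k < +oo)%E & (hdot2 s g k < +oo)%E].

(* Main.v *)
Require Import Defs.
From HB Require Import structures.
From mathcomp Require Import all_boot all_order all_algebra.
From mathcomp Require Import all_classical all_reals all_analysis.
From mathcomp Require Import ring lra measurable_realfun.
Import Order.TTheory GRing.Theory Num.Theory.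
Import numFieldNormedType.Exports.
Local Open Scope classical_set_scope.
Local Open Scope ring_scope.

Lemma le_int_nm (R : realType) (f g : R3 R -> \bar R) :
  (forall x, (0 <= f x)%E) -> (forall x, (f x <= g x)%E) ->
  (\int[@leb3 R]_(x in setT) f x <= \int[@leb3 R]_(x in setT) g x)%E.
Proof.
move=> f0 fg.
have g0 : forall x, (0 <= g x)%E by move=> x; exact: le_trans (f0 x) (fg x).
rewrite !ge0_integralTE //.
apply: le_ereal_sup => _ [h hf <-]; exists h => // x.
exact: le_trans (hf x) (fg x).
Qed.

Lemma meas_norm3 (R : realType) (r : R) :
  measurable_fun setT (fun xi : R3 R => norm3 xi `^ r).
Proof.
rewrite /norm3.
have -> : (fun xi : R3 R => Num.sqrt (\sum_(j < 3) coord3 xi j ^+ 2) `^ r) =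
   (fun y => y `^ r) \o (@Num.sqrt R) \o (fun xi : R3 R => xi.1.1 ^+ 2 + xi.1.2 ^+ 2 + xi.2 ^+ 2).
  apply: funext => xi /=; by rewrite !big_ord_recr big_ord0 /= add0r.
have h1 := @measurable_powR R r.
have h2 : measurable_fun setT (@Num.sqrt R) := continuous_measurable_fun (@sqrt_continuous R).
have h3 := measurableT_comp h1 h2.
have h4 : measurable_fun setT (fun xi : R3 R => xi.1.1 ^+ 2 + xi.1.2 ^+ 2 + xi.2 ^+ 2).
apply: measurable_funD; [apply: measurable_funD|]; apply: measurable_funX.
- exact: measurableT_comp measurable_fst measurable_fst.
- exact: measurableT_comp measurable_snd measurable_fst.
- exact: measurable_snd.
exact: measurableT_comp h3 h4.
Qed.


Lemma meas_integrand (R : realType) (r : R) (u : cfield R) (j : 'I_3) :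
  (forall p, measurable_fun setT (fun xi => u xi p j)) ->
  measurable_fun setT (fun xi : R3 R => ((norm3 xi `^ r * cabs2 u xi j)%:E : \bar R)).
Proof.
move=> mu.
apply/(measurable_EFinP _ (fun xi : R3 R => norm3 xi `^ r * cabs2 u xi j)).
apply: measurable_funM; first exact: meas_norm3.
rewrite /cabs2; apply: measurable_funD; apply: measurable_funX; exact: mu.
Qed.

Lemma int_sum (R : realType) (s : R) (u0 u1 : cfield R) :
  in_hdot_pair s u0 u1 ->
  (\int[@leb3 R]_(xi in setT) (\sum_(j < 3) ((norm3 xi `^ (2 * (s + 1)) * cabs2 u0 xi j)%:E
       + (norm3 xi `^ (2 * s) * cabs2 u1 xi j)%:E))
   = \sum_(j < 3) (hdot2 (s + 1) u0 j + hdot2 s u1 j))%E.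
Proof.
move=> H.
have ge0 r (u : cfield R) xi j : (0 <= ((norm3 xi `^ r * cabs2 u xi j)%:E : \bar R))%E.
  by rewrite lee_fin; apply: mulr_ge0; [exact: powR_ge0| rewrite /cabs2 addr_ge0 // sqr_ge0].
rewrite ge0_integral_sum //; last first.
- by move=> j xi _; rewrite adde_ge0.
- move=> j; have [m0 m1 _ _] := H j.
  apply: emeasurable_funD; exact: meas_integrand.
apply: eq_bigr => j _; have [m0 m1 _ _] := H j.
rewrite ge0_integralD //; try (move=> *; exact: ge0); exact: meas_integrand.
Qed.


Section D.
Context {R : realType}.

Lemma der_add {f g : R -> R} {df dg t : R} : is_derive t 1 f df -> is_derive t 1 g dg ->
  is_derive t 1 (fun r => f r + g r) (df + dg).
Proof. move=> hf hg; exact: is_deriveD. Qed.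

Lemma der_mul {f g : R -> R} {df dg t : R} : is_derive t 1 f df -> is_derive t 1 g dg ->
  is_derive t 1 (fun r => f r * g r) (f t * dg + g t * df).
Proof. move=> hf hg; have := is_deriveM hf hg; by []. Qed.

Lemma der_cst (c t : R) : is_derive t 1 (fun _ : R => c) 0.
Proof. exact: is_derive_cst. Qed.

Lemma der_sum3 {f : 'I_3 -> R -> R} {df : 'I_3 -> R} {t : R} : (forall i, is_derive t 1 (f i) (df i)) ->
  is_derive t 1 (fun r => \sum_(i < 3) f i r) (\sum_(i < 3) df i).
Proof.
move=> h; have := is_derive_sum h.
have -> : (\sum_(i < 3) f i) = (fun r => \sum_(i < 3) f i r).
  by rewrite fct_sumE.
by [].
Qed.

Lemma sum3 (F : 'I_3 -> R) : \sum_(i < 3) F i =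
  F (@Ordinal 3 0 isT) + F (@Ordinal 3 1 isT) + F (@Ordinal 3 2 isT).
Proof.
rewrite !big_ord_recl big_ord0 addr0 addrA.
by congr (F _ + F _ + F _); apply: val_inj.
Qed.
End D.

Section Energy.
Context {R : realType}.
Variables (A B c : R) (x : 'I_3 -> R) (w v : R -> 'I_3 -> R).
Hypothesis c0 : 0 <= c.
Hypothesis w0 : forall k, w r k @[r --> 0^'+] --> w 0 k.
Hypothesis v0 : forall k, v r k @[r --> 0^'+] --> v 0 k.
Hypothesis dyn : forall t : R, 0 < t -> exists vv : 'I_3 -> R,
  (forall k, is_derive t 1 (fun r => w r k) (v t k)) /\
  (forall k, is_derive t 1 (fun r => v r k) (vv k)) /\
  (forall k, vv k + A * w t k + B * x k * (\sum_(j < 3) x j * w t j) + c * v t k = 0).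

Definition En (r : R) := \sum_(k < 3) (v r k * v r k) + A * \sum_(k < 3) (w r k * w r k)
  + B * ((\sum_(j < 3) x j * w r j) * (\sum_(j < 3) x j * w r j)).

Lemma der_scal {f : R -> R} {df t : R} (a : R) : is_derive t 1 f df ->
  is_derive t 1 (fun r => a * f r) (a * df).
Proof.
move=> h; have H := der_mul (der_cst a t) h.
rewrite /= mulr0 addr0 in H; exact: H.
Qed.

Lemma En_der (t : R) : 0 < t -> is_derive t 1 En (derive1 En t) /\ derive1 En t <= 0.
Proof.
move=> t0; have [vv [hw [hv he]]] := dyn _ t0.
set S' := \sum_(j < 3) x j * v t j.
set S := \sum_(j < 3) x j * w t j.
have hS : is_derive t 1 (fun r => \sum_(j < 3) x j * w r j) S'.
  apply: der_sum3 => j; exact: (der_scal (x j) (hw j)).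
have hD : is_derive t 1 En
   (\sum_(k < 3) (v t k * vv k + v t k * vv k) + A * \sum_(k < 3) (w t k * v t k + w t k * v t k)
    + B * (S * S' + S * S')).
  have H1 : is_derive t 1 (fun r => \sum_(k < 3) (v r k * v r k)) (\sum_(k < 3) (v t k * vv k + v t k * vv k)).
    by apply: der_sum3 => k; exact: (der_mul (hv k) (hv k)).
  have H2 : is_derive t 1 (fun r => A * \sum_(k < 3) (w r k * w r k)) (A * \sum_(k < 3) (w t k * v t k + w t k * v t k)).
    by apply: der_scal; apply: der_sum3 => k; exact: (der_mul (hw k) (hw k)).
  exact: (der_add (der_add H1 H2) (der_scal B (der_mul hS hS))).
have -> : derive1 En t = \sum_(k < 3) (v t k * vv k + v t k * vv k) + A * \sum_(k < 3) (w t k * v t k + w t k * v t k)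
    + B * (S * S' + S * S').
  by rewrite derive1E; exact: derive_val.
split => //.
have e k : vv k = - (A * w t k + B * x k * S + c * v t k).
  by apply/eqP; rewrite -addr_eq0 -(he k) /S; apply/eqP; ring.
rewrite /S' !sum3 !e /S !sum3.
set b0 := v t (@Ordinal 3 0 isT); set b1 := v t (@Ordinal 3 1 isT); set b2 := v t (@Ordinal 3 2 isT).
apply: (@le_trans _ _ (- (2 * c * (b0 ^+ 2 + b1 ^+ 2 + b2 ^+ 2)))).
  by rewrite le_eqVlt; apply/orP; left; apply/eqP; ring.
rewrite oppr_le0; apply: mulr_ge0; first by apply: mulr_ge0.
by rewrite !addr_ge0 // sqr_ge0.
Qed.

Lemma En_cont : En r @[r --> 0^'+] --> En 0.
Proof.
have -> : En = fun r => (v r (@Ordinal 3 0 isT) * v r (@Ordinal 3 0 isT) + v r (@Ordinal 3 1 isT) * v r (@Ordinal 3 1 isT) + v r (@Ordinal 3 2 isT) * v r (@Ordinal 3 2 isT))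
  + A * (w r (@Ordinal 3 0 isT) * w r (@Ordinal 3 0 isT) + w r (@Ordinal 3 1 isT) * w r (@Ordinal 3 1 isT) + w r (@Ordinal 3 2 isT) * w r (@Ordinal 3 2 isT))
  + B * ((x (@Ordinal 3 0 isT) * w r (@Ordinal 3 0 isT) + x (@Ordinal 3 1 isT) * w r (@Ordinal 3 1 isT) + x (@Ordinal 3 2 isT) * w r (@Ordinal 3 2 isT))
     * (x (@Ordinal 3 0 isT) * w r (@Ordinal 3 0 isT) + x (@Ordinal 3 1 isT) * w r (@Ordinal 3 1 isT) + x (@Ordinal 3 2 isT) * w r (@Ordinal 3 2 isT))).
  by apply: funext => r; rewrite /En !sum3.
repeat (apply: cvgD || apply: cvgM || apply: cvgMr || apply: cvgMl || exact: cvg_cst || exact: w0 || exact: v0).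
Qed.

Lemma En_mono (t : R) : 0 <= t -> En t <= En 0.
Proof.
rewrite le_eqVlt => /orP [/eqP <- // | t0].
have key : forall e, 0 < e -> e <= t -> En t <= En e.
  move=> e e0 et.
  have der : forall y, 0 < y -> derivable En y 1.
    by move=> y y0; have [[h _] _] := En_der y y0.
  apply: (@ler0_derive1_le_oc _ En 0 t).
  - by move=> y; rewrite in_itv /= => /andP [y0 _]; exact: der.
  - by move=> y; rewrite in_itv /= => /andP [y0 _]; have [_ h] := En_der y y0.
  - apply: derivable_within_continuous => y; rewrite in_itv /= => /andP [y0 _]; exact: der.
  - by rewrite in_itv /=; apply/andP; split.
  - by rewrite in_itv /=; apply/andP; split.
  - exact: et.
apply: (cvgr_to_ge En_cont).
near=> e; apply: key.
- by near: e; exact: nbhs_right_gt.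
- by near: e; exact: nbhs_right_le.
Unshelve. all: by end_near.
Qed.
End Energy.


Lemma norm3_sq (R : realType) (xi : R3 R) :
  norm3 xi ^+ 2 = \sum_(j < 3) coord3 xi j ^+ 2.
Proof. by rewrite /norm3 sqr_sqrtr // sumr_ge0 // => j _; exact: sqr_ge0. Qed.

Lemma sum_ge_one {R : realType} (f : 'I_3 -> R) k : (forall j, 0 <= f j) -> f k <= \sum_(j < 3) f j.
Proof.
move=> f0; rewrite (bigD1 k) //= lerDl; apply: sumr_ge0 => j _; exact: f0.
Qed.

Lemma cs_alg {R : realType} (A2 B2 x0 x1 x2 w0 w1 w2 v0 v1 v2 : R) : A2 <= B2 ->
 v0*v0+v1*v1+v2*v2 + A2*(x0^+2+x1^+2+x2^+2)*(w0*w0+w1*w1+w2*w2)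
   + (B2-A2)*((x0*w0+x1*w1+x2*w2)*(x0*w0+x1*w1+x2*w2))
 <= v0^+2+v1^+2+v2^+2 + B2*(x0^+2+x1^+2+x2^+2)*(w0^+2+w1^+2+w2^+2).
Proof.
move=> h; rewrite -subr_ge0.
have -> : v0^+2+v1^+2+v2^+2 + B2*(x0^+2+x1^+2+x2^+2)*(w0^+2+w1^+2+w2^+2) -
 (v0*v0+v1*v1+v2*v2 + A2*(x0^+2+x1^+2+x2^+2)*(w0*w0+w1*w1+w2*w2)
   + (B2-A2)*((x0*w0+x1*w1+x2*w2)*(x0*w0+x1*w1+x2*w2)))
 = (B2 - A2) * ((x0*w1-x1*w0)^+2 + (x0*w2-x2*w0)^+2 + (x1*w2-x2*w1)^+2) by ring.
by apply: mulr_ge0; [rewrite subr_ge0 | rewrite !addr_ge0 // sqr_ge0].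
Qed.

Lemma pw_real (R : realType) (a b theta : R) (u0 u1 : cfield R) (U Ut : R -> cfield R)
   (xi : R3 R) (p : bool) (k : 'I_3) (t : R) :
  0 < a ^+ 2 -> a ^+ 2 < b ^+ 2 ->
  is_lame_solution a b theta u0 u1 U Ut -> 0 <= t ->
  Ut t xi p k ^+ 2 + a ^+ 2 * norm3 xi ^+ 2 * U t xi p k ^+ 2 <=
  \sum_(j < 3) (u1 xi p j ^+ 2) + b ^+ 2 * norm3 xi ^+ 2 * \sum_(j < 3) (u0 xi p j ^+ 2).
Proof.
move=> a0 ab [i0 i1 c0 c1 dyn] t0.
have cpos : 0 <= norm3 xi `^ (2 * theta) by exact: powR_ge0.
set E := En (a ^+ 2 * norm3 xi ^+ 2) (b ^+ 2 - a ^+ 2) (coord3 xi) (fun r => U r xi p) (fun r => Ut r xi p).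
have H : E t <= E 0.
  apply: (@En_mono R _ _ (norm3 xi `^ (2 * theta)) _ _ _ cpos (fun k => c0 xi p k) (fun k => c1 xi p k)) => //.
  move=> r r0; have [Utt [h1 [h2 h3]]] := dyn r r0 xi.
  exists (Utt p); split; [by move=> j; exact: h1|split; [by move=> j; exact: h2|]].
  by move=> j; exact: (h3 p j).
apply: le_trans (_ : E t <= _).
  rewrite /E /En -addrA lerD //.
    rewrite expr2; apply: (sum_ge_one (fun j => Ut t xi p j * Ut t xi p j)) => j; rewrite -expr2; exact: sqr_ge0.
  apply: le_trans (_ : _ <= a ^+ 2 * norm3 xi ^+ 2 * \sum_(k0 < 3) U t xi p k0 * U t xi p k0) _.
    rewrite ler_wpM2l //; first by apply: mulr_ge0; [exact: ltW|exact: sqr_ge0].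
    rewrite expr2; apply: (sum_ge_one (fun j => U t xi p j * U t xi p j)) => j; rewrite -expr2; exact: sqr_ge0.
  rewrite lerDl; apply: mulr_ge0; first by rewrite subr_ge0 ltW.
  rewrite -expr2; exact: sqr_ge0.
apply: (le_trans H).
rewrite /E /En /= !sum3 !i0 !i1 !norm3_sq !sum3.
exact: cs_alg (ltW ab).
Qed.

Lemma alg2 {R : realType} (a2 b2 n2 V W G : R) : 0 < a2 -> 0 <= n2 -> 0 <= V -> 0 <= W ->
  V + a2 * n2 * W <= (1 + b2) * G ->
  V + n2 * W <= (1 + a2^-1) * (1 + b2) * G.
Proof.
move=> a0 n0 V0 W0 h.
have ia : a2^-1 * a2 = 1 by rewrite mulVf // gt_eqF.
have ia0 : 0 <= a2^-1 by rewrite invr_ge0 ltW.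
rewrite -mulrA; apply: le_trans (_ : _ <= (1 + a2^-1) * (V + a2 * n2 * W)) _.
  rewrite -subr_ge0.
  have -> : (1 + a2^-1) * (V + a2 * n2 * W) - (V + n2 * W) = a2^-1 * V + a2 * n2 * W + (a2^-1 * a2 - 1) * n2 * W by ring.
  rewrite ia subrr !mul0r addr0; apply: addr_ge0; apply: mulr_ge0 => //; apply: mulr_ge0 => //; exact: ltW.
by rewrite ler_pM2l // ltr_pwDl.
Qed.

Lemma pw (R : realType) (a b theta : R) (u0 u1 : cfield R) (U Ut : R -> cfield R)
   (xi : R3 R) (k : 'I_3) (t : R) :
  0 < a ^+ 2 -> a ^+ 2 < b ^+ 2 ->
  is_lame_solution a b theta u0 u1 U Ut -> 0 <= t ->
  cabs2 (Ut t) xi k + norm3 xi ^+ 2 * cabs2 (U t) xi k <=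
  (1 + (a ^+ 2)^-1) * (1 + b ^+ 2) *
     \sum_(j < 3) (cabs2 u1 xi j + norm3 xi ^+ 2 * cabs2 u0 xi j).
Proof.
move=> a0 ab sol t0.
have hf := @pw_real R a b theta u0 u1 U Ut xi false k t a0 ab sol t0.
have hT := @pw_real R a b theta u0 u1 U Ut xi true k t a0 ab sol t0.
have n0 : 0 <= norm3 xi ^+ 2 by exact: sqr_ge0.
apply: alg2 => //.
- by rewrite /cabs2 addr_ge0 // sqr_ge0.
- by rewrite /cabs2 addr_ge0 // sqr_ge0.
rewrite /cabs2.
set n2 := norm3 xi ^+ 2 in hf hT n0 *.
have q p : \sum_(j < 3) u1 xi p j ^+ 2 + b ^+ 2 * n2 * \sum_(j < 3) u0 xi p j ^+ 2 <=
   (1 + b ^+ 2) * (\sum_(j < 3) u1 xi p j ^+ 2 + n2 * \sum_(j < 3) u0 xi p j ^+ 2).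
  have s1 : 0 <= \sum_(j < 3) u1 xi p j ^+ 2 by apply: sumr_ge0 => j _; exact: sqr_ge0.
  have s0 : 0 <= n2 * \sum_(j < 3) u0 xi p j ^+ 2 by apply: mulr_ge0 => //; apply: sumr_ge0 => j _; exact: sqr_ge0.
  rewrite -subr_ge0.
  have -> : (1 + b ^+ 2) * (\sum_(j < 3) u1 xi p j ^+ 2 + n2 * \sum_(j < 3) u0 xi p j ^+ 2) -
     (\sum_(j < 3) u1 xi p j ^+ 2 + b ^+ 2 * n2 * \sum_(j < 3) u0 xi p j ^+ 2)
     = b ^+ 2 * \sum_(j < 3) u1 xi p j ^+ 2 + n2 * \sum_(j < 3) u0 xi p j ^+ 2 by ring.
  by rewrite addr_ge0 // mulr_ge0 // sqr_ge0.
have qf := le_trans hf (q false).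
have qt := le_trans hT (q true).
have -> : \sum_(j < 3) (u1 xi false j ^+ 2 + u1 xi true j ^+ 2 + n2 * (u0 xi false j ^+ 2 + u0 xi true j ^+ 2))
   = (\sum_(j < 3) u1 xi false j ^+ 2 + n2 * \sum_(j < 3) u0 xi false j ^+ 2)
   + (\sum_(j < 3) u1 xi true j ^+ 2 + n2 * \sum_(j < 3) u0 xi true j ^+ 2).
  rewrite !sum3; ring.
have h := lerD qf qt; rewrite -mulrDr in h.
apply: (le_trans _ h); rewrite le_eqVlt; apply/orP; left; apply/eqP; rewrite /cabs2; ring.
Qed.

Lemma final_real {R : realType} (K x1 x2 c0 c1 c2 : R) : 0 <= K -> 0 <= c0 -> 0 <= c1 -> 0 <= c2 ->
  x1 <= K * (c0 + c1 + c2) -> x2 <= K * (c0 + c1 + c2) ->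
  Num.sqrt x1 + Num.sqrt x2 <= 2 * Num.sqrt K * (Num.sqrt c0 + Num.sqrt c1 + Num.sqrt c2).
Proof.
move=> K0 h0 h1 h2 hx1 hx2.
have s0 := sqrtr_ge0 c0; have s1 := sqrtr_ge0 c1; have s2 := sqrtr_ge0 c2.
have e0 := sqr_sqrtr h0; have e1 := sqr_sqrtr h1; have e2 := sqr_sqrtr h2.
have hs : Num.sqrt (c0 + c1 + c2) <= Num.sqrt c0 + Num.sqrt c1 + Num.sqrt c2.
  rewrite -[X in _ <= X]ger0_norm; last by rewrite !addr_ge0.
  rewrite -sqrtr_sqr; apply: ler_wsqrtr.
  have p01 := mulr_ge0 s0 s1; have p02 := mulr_ge0 s0 s2; have p12 := mulr_ge0 s1 s2.
  move: e0 e1 e2 p01 p02 p12; set a := Num.sqrt c0; set b := Num.sqrt c1; set c := Num.sqrt c2.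
  move=> e0 e1 e2 p01 p02 p12.
  rewrite -subr_ge0.
  have -> : (a + b + c) ^+ 2 - (c0 + c1 + c2) = 2 * (a * b + a * c + b * c) + (a ^+ 2 - c0) + (b ^+ 2 - c1) + (c ^+ 2 - c2) by ring.
  by rewrite e0 e1 e2 !subrr !addr0 mulr_ge0 // !addr_ge0.
have hK : Num.sqrt (K * (c0 + c1 + c2)) <= Num.sqrt K * (Num.sqrt c0 + Num.sqrt c1 + Num.sqrt c2).
  by rewrite sqrtrM // ler_wpM2l // sqrtr_ge0.
have y1 := le_trans (ler_wsqrtr hx1) hK.
have y2 := le_trans (ler_wsqrtr hx2) hK.
by rewrite -mulrA mulr2n mulrDl mul1r lerD.
Qed.

Lemma powR_split {R : realType} (y s : R) : 0 <= y -> 0 <= s ->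
  y `^ (2 * (s + 1)) = y `^ (2 * s) * y ^+ 2.
Proof.
move=> y0 s0; rewrite mulrDr mulr1 powRD; last first.
  by apply/implyP => h; exfalso; move: h; rewrite gt_eqF // ltr_wpDl // mulr_ge0.
by rewrite powR_mulrn.
Qed.


Lemma pw_int (R : realType) (a b theta s : R) (u0 u1 : cfield R) (U Ut : R -> cfield R)
   (xi : R3 R) (k : 'I_3) (t : R) :
  0 < a ^+ 2 -> a ^+ 2 < b ^+ 2 -> 0 <= s ->
  is_lame_solution a b theta u0 u1 U Ut -> 0 <= t ->
  let G := \sum_(j < 3) (norm3 xi `^ (2 * (s + 1)) * cabs2 u0 xi j + norm3 xi `^ (2 * s) * cabs2 u1 xi j) in
  let K := (1 + (a ^+ 2)^-1) * (1 + b ^+ 2) in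
  norm3 xi `^ (2 * (s + 1)) * cabs2 (U t) xi k <= K * G /\
  norm3 xi `^ (2 * s) * cabs2 (Ut t) xi k <= K * G.
Proof.
move=> a0 ab s0 sol t0 G K.
have n0 : 0 <= norm3 xi by exact: sqrtr_ge0.
have h := @pw R a b theta u0 u1 U Ut xi k t a0 ab sol t0.
have m0 : 0 <= norm3 xi `^ (2 * s) by exact: powR_ge0.
have c0 : 0 <= cabs2 (U t) xi k by rewrite /cabs2 addr_ge0 // sqr_ge0.
have c1 : 0 <= cabs2 (Ut t) xi k by rewrite /cabs2 addr_ge0 // sqr_ge0.
have n2 : 0 <= norm3 xi ^+ 2 by exact: sqr_ge0.
have eG : K * G = norm3 xi `^ (2 * s) * (K * \sum_(j < 3) (cabs2 u1 xi j + norm3 xi ^+ 2 * cabs2 u0 xi j)).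
  rewrite /G /K !sum3 !(powR_split _ _ n0 s0); ring.
rewrite eG !(powR_split _ _ n0 s0); split.
- rewrite -mulrA ler_wpM2l //; apply: le_trans h; rewrite -subr_ge0 addrK //.
- rewrite ler_wpM2l //; apply: le_trans h; rewrite -subr_ge0 addrAC subrr add0r mulr_ge0 //.
Qed.

Lemma hdot2_ge0 (R : realType) (r : R) (v : cfield R) k : (0 <= hdot2 r v k)%E.
Proof.
apply: integral_ge0 => xi _; rewrite lee_fin; apply: mulr_ge0; first exact: powR_ge0.
by rewrite /cabs2 addr_ge0 // sqr_ge0.
Qed.

Lemma ge0_fin (R : realType) (X : \bar R) (y : R) : (0 <= X)%E -> (X <= y%:E)%E ->
  X = (fine X)%:E /\ 0 <= fine X /\ fine X <= y.
Proof.
move=> X0 Xy.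
have fX : X \is a fin_num by rewrite ge0_fin_numE // (le_lt_trans Xy) // ltey.
split; first by rewrite fineK.
split; first exact: fine_ge0.
by rewrite -lee_fin fineK.
Qed.

Theorem theorem3p2 (R : realType) (a b theta s : R) :
  0 < a ^+ 2 -> a ^+ 2 < b ^+ 2 -> 0 <= theta <= 1 -> 0 <= s ->
  exists C : R, 0 <= C /\
    forall (u0 u1 : cfield R) (U Ut : R -> cfield R),
      in_hdot_pair s u0 u1 ->
      is_lame_solution a b theta u0 u1 U Ut ->
      forall (k : 'I_3) (t : R), 0 <= t ->
        (hdot (s + 1) (U t) k + hdot s (Ut t) k
          <= C%:E * \sum_(j < 3) hdot_pair s u0 u1 j)%E.
Proof.
move=> a0 ab _ s0.
set K := (1 + (a ^+ 2)^-1) * (1 + b ^+ 2).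
have K0 : 0 <= K by apply: mulr_ge0; apply: addr_ge0 => //; [rewrite invr_ge0; exact: ltW | exact: sqr_ge0].
exists (2 * Num.sqrt K); split; first by rewrite mulr_ge0 // sqrtr_ge0.
move=> u0 u1 U Ut H sol k t t0.
set A := fun j => fine (hdot2 (s + 1) u0 j).
set B := fun j => fine (hdot2 s u1 j).
have eA j : hdot2 (s + 1) u0 j = (A j)%:E.
  have [_ _ f _] := H j; rewrite /A fineK // ge0_fin_numE //; exact: hdot2_ge0.
have eB j : hdot2 s u1 j = (B j)%:E.
  have [_ _ _ f] := H j; rewrite /B fineK // ge0_fin_numE //; exact: hdot2_ge0.
have A0 j : 0 <= A j by rewrite /A fine_ge0 // hdot2_ge0.
have B0 j : 0 <= B j by rewrite /B fine_ge0 // hdot2_ge0.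
set Gf := fun xi : R3 R => (\sum_(j < 3) ((norm3 xi `^ (2 * (s + 1)) * cabs2 u0 xi j)%:E
       + (norm3 xi `^ (2 * s) * cabs2 u1 xi j)%:E))%E.
have ge0 r (u : cfield R) xi j : (0 <= ((norm3 xi `^ r * cabs2 u xi j)%:E : \bar R))%E.
  by rewrite lee_fin; apply: mulr_ge0; [exact: powR_ge0| rewrite /cabs2 addr_ge0 // sqr_ge0].
have Gf0 xi : (0 <= Gf xi)%E by apply: sume_ge0 => j _; rewrite adde_ge0.
have mGf : measurable_fun setT Gf.
  apply: emeasurable_sum => j; have [m0 m1 _ _] := H j.
  by apply: emeasurable_funD; exact: meas_integrand.
have eGf xi : Gf xi = (\sum_(j < 3) (norm3 xi `^ (2 * (s + 1)) * cabs2 u0 xi j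
       + norm3 xi `^ (2 * s) * cabs2 u1 xi j))%:E.
  by rewrite /Gf -sumEFin; apply: eq_bigr => j _; rewrite EFinD.
have intG : (\int[@leb3 R]_(xi in setT) (K%:E * Gf xi) = K%:E * (\sum_(j < 3) (A j + B j))%:E)%E.
  rewrite ge0_integralZl_EFin //; try (by move=> xi _); try exact: mGf.
  rewrite /Gf int_sum // -sumEFin; congr (_ * _)%E; apply: eq_bigr => j _.
  by rewrite eA eB EFinD.
have X1 : (hdot2 (s + 1) (U t) k <= (K * \sum_(j < 3) (A j + B j))%:E)%E.
  rewrite EFinM -intG /hdot2; apply: le_int_nm => xi; first exact: ge0.
  rewrite eGf -EFinM lee_fin; exact: (@pw_int R a b theta s u0 u1 U Ut xi k t a0 ab s0 sol t0).1.
have X2 : (hdot2 s (Ut t) k <= (K * \sum_(j < 3) (A j + B j))%:E)%E.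
  rewrite EFinM -intG /hdot2; apply: le_int_nm => xi; first exact: ge0.
  rewrite eGf -EFinM lee_fin; exact: (@pw_int R a b theta s u0 u1 U Ut xi k t a0 ab s0 sol t0).2.
have [e1 [x10 x1le]] := @ge0_fin R _ _ (hdot2_ge0 _ _ _ _) X1.
have [e2 [x20 x2le]] := @ge0_fin R _ _ (hdot2_ge0 _ _ _ _) X2.
rewrite /hdot e1 e2 !poweR_EFin !powR12_sqrt //.
rewrite (eq_bigr (fun j => (Num.sqrt (A j + B j))%:E)); last first.
  by move=> j _; rewrite /hdot_pair eA eB -EFinD poweR_EFin powR12_sqrt // addr_ge0.
rewrite sumEFin -EFinM -EFinD lee_fin.
rewrite sum3 in x1le x2le; rewrite sum3.
apply: final_real => //; by rewrite addr_ge0.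
Qed.
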